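(* Let $\mathbb{K}\in\{\mathbb{R},\mathbb{C}\}$, $B$ a commutative Banach algebra over $\mathbb{K}$, $(\omega_k)_{k\in\mathbb{N}}$ a convex growth family and $((\mathcal{H},\Sigma),(\omega_k)_k)$ a control pair. Consider the locally convex algebra $(\ell^\infty_{\rightarrow}(\mathcal{H},B),\star)$ and its commutator Lie algebra with $[\varphi,\psi]=\varphi\star\psi-\psi\star\varphi$. (1) The set $G_{\mathrm{ctr}}(\mathcal{H},B)$ of controlled characters is a closed subgroup of the unit group of $(\ell^\infty_{\rightarrow}(\mathcal{H},B),\star)$; inversion in this group is $\phi\mapsto\phi\circ S$ and the unit element is $x\mapsto\epsilon(x)1_B$. (2) The set $\mathfrak{g}_{\mathrm{ctr}}(\mathcal{H},B)$ of controlled infinitesimal characters is a closed Lie subalgebra of $(\ell^\infty_{\rightarrow}(\mathcal{H},B),[\cdot,\cdot])$.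
   Context: A growth family is a family $(\omega_k)_{k\in\mathbb{N}}$ of functions $\omega_k\colon\mathbb{N}_0\to\mathbb{N}$ with (W1) $\omega_k(0)=1$, $\omega_k(n)\le\omega_{k+1}(n)$; (W2) $\omega_k(n)\omega_k(m)\le\omega_k(n+m)$; (W3) for every $k_1$ there is $k_2\ge k_1$ with $\omega_{k_2}(n)\ge2^n\omega_{k_1}(n)$ for all $n$; convex means: for each $k_1$ one can choose such $k_2$ so that additionally for every $k_3\ge k_2$ some $\alpha\in]0,1[$ satisfies $\omega_{k_1}(n)^\alpha\omega_{k_3}(n)^{1-\alpha}\le\omega_{k_2}(n)$ for all $n$. For a set $J$ graded by $|\cdot|\colon J\to\mathbb{N}_0$: $\ell^1_{\leftarrow}(J)=\bigcap_k\{\sum c_\tau\tau:\sum|c_\tau|\omega_k(|\tau|)<\infty\}$ (projective limit topology); $\ell^\infty_{\rightarrow}(J,B)=\bigcup_k\{f\colon J\to B:\sup_\tau\|f(\tau)\|/\omega_k(|\tau|)<\infty\}$ (locally convex direct limit of these Banach spaces). A commutative Banach algebra: unital commutative, complete submultiplicative norm, $\|1_B\|=1$. A combinatorial Hopf algebra $(\mathcal{H},\Sigma)$: graded connected Hopf algebra over $\mathbb{K}$ (multiplication $m$, coproduct $\Delta$, counit $\epsilon$, antipode $S$) with $\Sigma\subseteq\mathcal{H}$ such that $\mathcal{H}$ is as an algebra, via a fixed isomorphism, $\mathbb{K}[\Sigma]$ or $\mathbb{K}\langle\Sigma\rangle$. With $M$ the free commutative monoid resp. free monoid on $\Sigma$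 (degree-additive grading), $\mathcal{H}=\mathbb{K}^{(M)}$, $\mathcal{H}\otimes\mathcal{H}=\mathbb{K}^{(M\times M)}$ with $|(\mu,\sigma)|=|\mu|+|\sigma|$. Control pair: $\Delta$ and $S$ extend to continuous linear maps $\ell^1_{\leftarrow}(M)\to\ell^1_{\leftarrow}(M\times M)$ resp. $\ell^1_{\leftarrow}(M)\to\ell^1_{\leftarrow}(M)$. A linear $\phi\colon\mathcal{H}\to B$ is controlled if $\phi|_M\in\ell^\infty_{\rightarrow}(M,B)$; $\ell^\infty_{\rightarrow}(\mathcal{H},B)$ denotes these maps, topologised as $\ell^\infty_{\rightarrow}(M,B)$. Convolution: $\phi\star\psi=m_B\circ(\phi\otimes\psi)\circ\Delta$. A character is a unital algebra homomorphism $\mathcal{H}\to B$; an infinitesimal character is a linear $\phi$ with $\phi(ab)=\phi(a)\epsilon(b)+\epsilon(a)\phi(b)$. Controlled (infinitesimal) characters are those that are controlled linear maps. *)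

(* Defs.v *)
From HB Require Import structures.
From mathcomp Require Import all_boot all_order all_algebra.
From mathcomp Require Import all_classical all_reals all_analysis.
From mathcomp Require Import finmap multiset complex.

Set Implicit Arguments.
Unset Strict Implicit.
Unset Printing Implicit Defensive.

Import Order.TTheory GRing.Theory Num.Theory.
Local Open Scope ring_scope.
Local Open Scope classical_set_scope.

(* Concrete free monoids M on a generating set Sig, with the degree-additive  *)
(* grading induced by deg : Sig -> nat.                                       *)
(*   noncommutative case: words  (seq Sig, cat, [::])                         *)
(*   commutative case   : finite multisets ({mset Sig}, msetD, mset0)          *)
Definition wdeg (Sig : choiceType) (deg : Sig -> nat) (w : seq Sig) : nat :=
  (\sum_(s <- w) deg s)%N.

Definition msdeg (Sig : choiceType) (deg : Sig -> nat) (A : {mset Sig}%mset) : nat :=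
  (\sum_(s <- finsupp A) A s * deg s)%N.

Definition cabs (R : realType) (z : R[i]) : R := @ComplexField.Normc.normc R z.

Section Defs.
Variables (R : realType) (K : fieldType) (absK : K -> R).

(* Finitely supported functions X -> K (elements of K^(X)) are represented by  *)
(* formal finite linear combinations, i.e. lists of (basis element, coeff).   *)
Definition coef (X : eqType) (l : seq (X * K)) (x : X) : K :=
  \sum_(t <- l | t.1 == x) t.2.

Definition fc_eq (X : eqType) (l1 l2 : seq (X * K)) : Prop :=
  forall x, coef l1 x = coef l2 x.

Definition kdelta (X : eqType) (x : X) : X -> K := fun y => if y == x then 1 else 0.

Variables (M : choiceType) (mmul : M -> M -> M) (mone : M) (msz : M -> nat).

(* Product in H = K^(M) (monoid algebra) and in H (x) H = K^(M x M). *)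
Definition hmul (h1 h2 : seq (M * K)) : seq (M * K) :=
  [seq (mmul a.1 b.1, a.2 * b.2) | a <- h1, b <- h2].

Definition tmul (h1 h2 : seq ((M * M) * K)) : seq ((M * M) * K) :=
  [seq ((mmul a.1.1 b.1.1, mmul a.1.2 b.1.2), a.2 * b.2) | a <- h1, b <- h2].

(* Hopf algebra structure on H = K^(M): coproduct D, counit eps, antipode S,  *)
(* each given on the basis M and extended linearly.                           *)
Section Hopf.
Variables (D : M -> seq ((M * M) * K)) (eps : M -> K) (S : M -> seq (M * K)).

Definition graded_connected_hopf : Prop :=
  [/\ (* Delta is an algebra morphism H -> H (x) H *)
      ((forall a b, fc_eq (D (mmul a b)) (tmul (D a) (D b))) /\
      fc_eq (D mone) [:: ((mone, mone), 1)]),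
      (* coassociativity: (Delta (x) id) Delta = (id (x) Delta) Delta *)
      (forall mu, fc_eq
         (flatten [seq [seq ((u.1.1, u.1.2, t.1.2), u.2 * t.2) | u <- D t.1.1]
                  | t <- D mu])
         (flatten [seq [seq ((t.1.1, v.1.1, v.1.2), t.2 * v.2) | v <- D t.1.2]
                  | t <- D mu])),
      (* counit: eps is an algebra morphism H -> K, and
         (eps (x) id) Delta = id = (id (x) eps) Delta *)
      ((forall a b, eps (mmul a b) = eps a * eps b) /\ eps mone = 1) /\
      (forall mu, fc_eq [seq (t.1.2, eps t.1.1 * t.2) | t <- D mu] [:: (mu, 1)]
               /\ fc_eq [seq (t.1.1, eps t.1.2 * t.2) | t <- D mu] [:: (mu, 1)]),
      (* antipode: m (S (x) id) Delta = 1 eps = m (id (x) S) Delta *)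
      (forall mu,
          fc_eq (flatten [seq hmul [seq (s.1, t.2 * s.2) | s <- S t.1.1] [:: (t.1.2, 1)]
                         | t <- D mu]) [:: (mone, eps mu)]
       /\ fc_eq (flatten [seq hmul [:: (t.1.1, t.2)] (S t.1.2) | t <- D mu])
                [:: (mone, eps mu)]) &
      (* grading (the product is graded since msz is degree-additive):
         Delta and eps are graded, and H is connected (H_0 = K 1) *)
      [/\ forall mu x y, coef (D mu) (x, y) != 0 -> (msz x + msz y)%N = msz mu,
          forall mu, msz mu != 0%N -> eps mu = 0 &
          forall mu, msz mu = 0%N -> mu = mone]].
End Hopf.

Definition growth_family (omega : nat -> nat -> nat) : Prop :=
  [/\ forall k n, (0 < omega k n)%N,
      forall k, omega k 0%N = 1%N,
      forall k n, (omega k n <= omega k.+1 n)%N,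
      forall k n m, (omega k n * omega k m <= omega k (n + m))%N &
      forall k1, exists k2, (k1 <= k2)%N /\
        forall n, (2 ^ n * omega k1 n <= omega k2 n)%N].

Definition convex_growth_family (omega : nat -> nat -> nat) : Prop :=
  growth_family omega /\
  forall k1, exists k2, [/\ (k1 <= k2)%N,
    (forall n, (2 ^ n * omega k1 n <= omega k2 n)%N) &
    forall k3, (k2 <= k3)%N -> exists alpha : R, 0 < alpha < 1 /\
      forall n, ((omega k1 n)%:R `^ alpha) * ((omega k3 n)%:R `^ (1 - alpha))
                <= (omega k2 n)%:R :> R].

Section L1.
Variable omega : nat -> nat -> nat.

Definition l1_sum (J : choiceType) (g : J -> nat) (k : nat) (c : J -> K) : \bar R :=
  \esum_(t in [set: J]) ((absK (c t) * (omega k (g t))%:R)%:E).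

Definition l1 (J : choiceType) (g : J -> nat) : set (J -> K) :=
  [set c | forall k, (l1_sum g k c < +oo)%E].

Definition l1_norm (J : choiceType) (g : J -> nat) (k : nat) (c : J -> K) : R :=
  fine (l1_sum g k c).

(* increasing in k, so single seminorm balls form a neighbourhood base).     *)
Definition l1_cont_linear (J1 J2 : choiceType) (g1 : J1 -> nat) (g2 : J2 -> nat)
    (T : (J1 -> K) -> (J2 -> K)) : Prop :=
  [/\ forall c, l1 g1 c -> l1 g2 (T c),
      forall a c d, l1 g1 c -> l1 g1 d ->
        T (fun t => a * c t + d t) = (fun t => a * T c t + T d t) &
      forall c0, l1 g1 c0 -> forall k (e : R), 0 < e ->
        exists k' (d : R), 0 < d /\
          forall c, l1 g1 c -> l1_norm g1 k' (fun t => c t - c0 t) < d ->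
            l1_norm g2 k (fun t => T c t - T c0 t) < e].

Definition pair_deg (p : M * M) : nat := (msz p.1 + msz p.2)%N.

(* ((H, Sigma), omega) is a control pair: Delta and S extend to continuous   *)
(* linear maps on the ell^1 completions.                                     *)
Definition control_pair (D : M -> seq ((M * M) * K)) (S : M -> seq (M * K)) : Prop :=
  (exists T : (M -> K) -> (M * M -> K),
      l1_cont_linear msz pair_deg T /\ forall mu, T (kdelta mu) = coef (D mu))
  /\ (exists T : (M -> K) -> (M -> K),
      l1_cont_linear msz msz T /\ forall mu, T (kdelta mu) = coef (S mu)).
End L1.

Definition banach_algebra_norm (B : comAlgType K) (nB : B -> R) : Prop :=
  [/\ ((forall x, 0 <= nB x) /\ (forall x, nB x = 0 -> x = 0)),
      forall x y, nB (x + y) <= nB x + nB y,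
      forall (a : K) x, nB (a *: x) = absK a * nB x,
      ((forall x y, nB (x * y) <= nB x * nB y) /\ nB 1 = 1) &
      forall u : nat -> B,
        (forall e : R, 0 < e -> exists N, forall n m, (N <= n)%N -> (N <= m)%N ->
           nB (u n - u m) < e) ->
        exists l, forall e : R, 0 < e -> exists N, forall n, (N <= n)%N ->
           nB (u n - l) < e].

(* A linear map H -> B is identified with its restriction phi : M -> B.      *)
Section Linf.
Variables (B : comAlgType K) (nB : B -> R) (omega : nat -> nat -> nat).

Definition kball (k : nat) (r : R) (phi : M -> B) : Prop :=
  forall mu, nB (phi mu) <= r * (omega k (msz mu))%:R.

(* ell^infty_->(H, B) = union of the Banach spaces E_k *)
Definition linf : set (M -> B) := [set phi | exists k r, kball k r phi].

Definition absconvex (W : set (M -> B)) : Prop :=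
  forall (a b : K) x y, absK a + absK b <= 1 -> W x -> W y ->
    W (fun mu => a *: x mu + b *: y mu).

(* basic 0-neighbourhoods of the locally convex direct limit topology:       *)
(* absolutely convex sets whose trace on every E_k is a 0-neighbourhood of E_k *)
Definition linf_zero_nbhd (W : set (M -> B)) : Prop :=
  [/\ W `<=` linf, absconvex W &
      forall k, exists r : R, 0 < r /\ forall psi, kball k r psi -> W psi].

Definition linf_open (O : set (M -> B)) : Prop :=
  O `<=` linf /\
  forall phi, O phi -> exists W, linf_zero_nbhd W /\
    forall psi, W psi -> O (fun mu => phi mu + psi mu).

Definition linf_closed (C : set (M -> B)) : Prop :=
  C `<=` linf /\ linf_open (linf `\` C).

Variables (D : M -> seq ((M * M) * K)) (eps : M -> K) (S : M -> seq (M * K)).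

Definition linext (phi : M -> B) (h : seq (M * K)) : B := \sum_(t <- h) t.2 *: phi t.1.
Definition epsext (h : seq (M * K)) : K := \sum_(t <- h) t.2 * eps t.1.

Definition conv (phi psi : M -> B) : M -> B :=
  fun mu => \sum_(t <- D mu) t.2 *: (phi t.1.1 * psi t.1.2).

Definition cunit : M -> B := fun mu => eps mu *: 1.

Definition compS (phi : M -> B) : M -> B := fun mu => linext phi (S mu).

Definition is_character (phi : M -> B) : Prop :=
  linext phi [:: (mone, 1)] = 1 /\
  forall h1 h2, linext phi (hmul h1 h2) = linext phi h1 * linext phi h2.

Definition is_inf_character (phi : M -> B) : Prop :=
  forall h1 h2, linext phi (hmul h1 h2) =
                epsext h2 *: linext phi h1 + epsext h1 *: linext phi h2.

Definition Gctr : set (M -> B) := [set phi | linf phi /\ is_character phi].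
Definition gctr : set (M -> B) := [set phi | linf phi /\ is_inf_character phi].

Definition linf_units : set (M -> B) :=
  [set phi | linf phi /\ exists psi, linf psi /\ conv phi psi = cunit /\ conv psi phi = cunit].

Definition lemma3p10_conclusion : Prop :=
  [/\ (forall phi, linf phi -> conv cunit phi = phi /\ conv phi cunit = phi) /\
      Gctr cunit,
      Gctr `<=` linf_units,
      (forall phi psi, Gctr phi -> Gctr psi -> Gctr (conv phi psi)),
      (forall phi, Gctr phi ->
         [/\ Gctr (compS phi), conv phi (compS phi) = cunit & conv (compS phi) phi = cunit]) &
      (* closed in the unit group (subspace topology) *)
      exists F, linf_closed F /\ Gctr = F `&` linf_units]
  /\
  [/\ gctr (fun _ => 0),
      (forall (a : K) phi psi, gctr phi -> gctr psi -> gctr (fun mu => a *: phi mu + psi mu)),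
      (forall phi psi, gctr phi -> gctr psi -> gctr (fun mu => conv phi psi mu - conv psi phi mu)) &
      linf_closed gctr].
End Linf.

Definition lemma3p10_stmt : Prop :=
  forall (B : comAlgType K) (nB : B -> R) (omega : nat -> nat -> nat)
         (D : M -> seq ((M * M) * K)) (eps : M -> K) (S : M -> seq (M * K)),
    banach_algebra_norm nB ->
    convex_growth_family omega ->
    graded_connected_hopf D eps S ->
    control_pair omega D S ->
    lemma3p10_conclusion nB omega D eps S.
End Defs.

(* Main.v *)
Require Import Defs.
From HB Require Import structures.
From mathcomp Require Import all_boot all_order all_algebra.
From mathcomp Require Import all_classical all_reals all_analysis.
From mathcomp Require Import finmap multiset complex.
From mathcomp Require Import ring lra.
Import Order.TTheory GRing.Theory Num.Theory.
Local Open Scope ring_scope.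

Set Implicit Arguments.
Unset Strict Implicit.
Unset Printing Implicit Defensive.


Section Lsum.
Variables (K : fieldType).

Definition Lsum (V : lmodType K) (X : Type) (f : X -> V) (l : seq (X * K)) : V :=
  \sum_(t <- l) t.2 *: f t.1.

Lemma Lsum_nil (V : lmodType K) (X : Type) (f : X -> V) : Lsum f [::] = 0.
Proof. by rewrite /Lsum big_nil. Qed.

Lemma Lsum_cons (V : lmodType K) (X : Type) (f : X -> V) t l :
  Lsum f (t :: l) = t.2 *: f t.1 + Lsum f l.
Proof. by rewrite /Lsum big_cons. Qed.

Lemma Lsum1 (V : lmodType K) (X : Type) (f : X -> V) x c :
  Lsum f [:: (x, c)] = c *: f x.
Proof. by rewrite /Lsum big_cons big_nil addr0. Qed.

Lemma Lsum_cat (V : lmodType K) (X : Type) (f : X -> V) l1 l2 :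
  Lsum f (l1 ++ l2) = Lsum f l1 + Lsum f l2.
Proof. by rewrite /Lsum big_cat. Qed.

Lemma Lsum_flatten (V : lmodType K) (X : Type) (f : X -> V) (ll : seq (seq (X * K))) :
  Lsum f (flatten ll) = \sum_(l <- ll) Lsum f l.
Proof. by rewrite /Lsum big_flatten. Qed.

Lemma Lsum_map (V : lmodType K) (X Y : Type) (f : X -> V) (g : Y -> X * K) l :
  Lsum f (map g l) = \sum_(t <- l) (g t).2 *: f (g t).1.
Proof. by rewrite /Lsum big_map. Qed.

Lemma Lsum_allpairs (V : lmodType K) (X Y Z : Type) (f : X -> V)
   (g : Y -> Z -> X * K) l1 l2 :
  Lsum f [seq g a b | a <- l1, b <- l2] = \sum_(a <- l1) \sum_(b <- l2) (g a b).2 *: f (g a b).1.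
Proof. by rewrite /Lsum big_allpairs_dep. Qed.

Lemma coef_nil (X : eqType) (x : X) : coef (K:=K) [::] x = 0.
Proof. by rewrite /coef big_nil. Qed.

Lemma coef_cons (X : eqType) (t : X * K) l x :
  coef (t :: l) x = (if t.1 == x then t.2 else 0) + coef l x.
Proof. by rewrite /coef big_cons; case: ifP => _; rewrite ?add0r. Qed.

Lemma Lsum_coef (V : lmodType K) (X : eqType) (f : X -> V) (l : seq (X * K)) (s : seq X) :
  uniq s -> {subset map fst l <= s} ->
  Lsum f l = \sum_(x <- s) coef l x *: f x.
Proof.
move=> us; elim: l => [|t l IH] sub.
  by rewrite Lsum_nil big1 // => x _; rewrite coef_nil scale0r.
rewrite Lsum_cons IH; last by move=> y yl; apply: sub; rewrite inE yl orbT.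
under [in RHS]eq_bigr => x _ do rewrite coef_cons scalerDl.
rewrite big_split /=; congr (_ + _).
have ts : t.1 \in s by apply: sub; rewrite inE eqxx.
rewrite (bigD1_seq t.1) //= eqxx big1 ?addr0 // => x xt.
by rewrite eq_sym (negbTE xt) scale0r.
Qed.

Lemma Lsum_fc_eq (V : lmodType K) (X : eqType) (f : X -> V) (l1 l2 : seq (X * K)) :
  fc_eq l1 l2 -> Lsum f l1 = Lsum f l2.
Proof.
move=> e.
rewrite (@Lsum_coef _ _ f l1 (undup (map fst (l1 ++ l2)))) ?undup_uniq //; last first.
  by move=> y yl; rewrite mem_undup map_cat mem_cat yl.
rewrite (@Lsum_coef _ _ f l2 (undup (map fst (l1 ++ l2)))) ?undup_uniq //; last first.
  by move=> y yl; rewrite mem_undup map_cat mem_cat yl orbT.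
by apply: eq_bigr => x _; rewrite e.
Qed.

Lemma coef_Lsum (X : eqType) (l : seq (X * K)) x :
  coef l x = Lsum (V := K^o) (fun y => if y == x then 1 else 0) l.
Proof.
rewrite /coef /Lsum big_mkcond /=; apply: eq_bigr => t _.
by case: (t.1 == x); [exact: (esym (mulr1 _)) | exact: (esym (mulr0 _))].
Qed.

Lemma fc_eq_Lsum (X : eqType) (l1 l2 : seq (X * K)) :
  (forall f : X -> K^o, Lsum f l1 = Lsum f l2) -> fc_eq l1 l2.
Proof. by move=> H x; rewrite !coef_Lsum H. Qed.

End Lsum.


Section Alg.
Variables (K : fieldType) (M : choiceType) (mmul : M -> M -> M) (mone : M).
Variable (B : comAlgType K).

Lemma Lsum_allpairs_mul (X : Type) (op : X -> X -> X) (F : X -> B) l1 l2 :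
  (forall x y, F (op x y) = F x * F y) ->
  Lsum F [seq (op a.1 b.1, a.2 * b.2) | a <- l1, b <- l2] = Lsum F l1 * Lsum F l2.
Proof.
move=> Fm; rewrite Lsum_allpairs /Lsum mulr_suml; apply: eq_bigr => a _.
rewrite mulr_sumr; apply: eq_bigr => b _ /=.
by rewrite Fm -scalerA -scalerAl -scalerAr.
Qed.

Lemma char_iff (phi : M -> B) :
  is_character mmul mone phi <-> (phi mone = 1 /\ forall x y, phi (mmul x y) = phi x * phi y).
Proof.
split.
  case=> h1 h2; split; first by move: h1; rewrite /linext -/(Lsum _ _) Lsum1 scale1r.
  move=> x y; move: (h2 [:: (x, 1)] [:: (y, 1)]).
  by rewrite /linext /hmul /= -!/(Lsum _ _) !Lsum1 mulr1 !scale1r.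
case=> h1 h2; split; first by rewrite /linext -/(Lsum _ _) Lsum1 scale1r.
move=> l1 l2; rewrite /linext /hmul -!/(Lsum _ _).
by apply: (@Lsum_allpairs_mul M mmul phi l1 l2).
Qed.

Variable eps : M -> K.

Lemma epsext_sum h : epsext eps h = \sum_(t <- h) t.2 * eps t.1.
Proof. by []. Qed.

Lemma inf_char_iff (phi : M -> B) :
  is_inf_character mmul eps phi <->
  (forall x y, phi (mmul x y) = eps y *: phi x + eps x *: phi y).
Proof.
split.
  move=> h x y; move: (h [:: (x, 1)] [:: (y, 1)]).
  rewrite /linext /hmul /epsext /= -!/(Lsum _ _) !Lsum1 mulr1 !scale1r.
  by rewrite !big_cons !big_nil !addr0 !mul1r.
move=> h l1 l2; rewrite /linext /hmul /epsext -!/(Lsum _ _).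
rewrite Lsum_allpairs /Lsum.
under eq_bigr => a _ do under eq_bigr => b _ do
  rewrite /= h scalerDr !scalerA.
under eq_bigr => a _ do rewrite big_split /=.
rewrite big_split /=; congr (_ + _).
  rewrite exchange_big /= scaler_suml; apply: eq_bigr => b _.
  rewrite scaler_sumr; apply: eq_bigr => a _.
  by rewrite scalerA; congr (_ *: _); ring.
rewrite scaler_suml; apply: eq_bigr => a _.
rewrite scaler_sumr; apply: eq_bigr => b _.
by rewrite scalerA; congr (_ *: _); ring.
Qed.

End Alg.


Section Hopf.
Variables (K : fieldType) (M : choiceType) (mmul : M -> M -> M) (mone : M).
Variable (B : comAlgType K).
Variables (D : M -> seq ((M * M) * K)) (eps : M -> K) (S : M -> seq (M * K)).

Hypothesis HDm : forall a b, fc_eq (D (mmul a b)) (tmul mmul (D a) (D b)).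
Hypothesis HD1 : fc_eq (D mone) [:: ((mone, mone), 1)].
Hypothesis Hcoass : forall mu, fc_eq
         (flatten [seq [seq ((u.1.1, u.1.2, t.1.2), u.2 * t.2) | u <- D t.1.1]
                  | t <- D mu])
         (flatten [seq [seq ((t.1.1, v.1.1, v.1.2), t.2 * v.2) | v <- D t.1.2]
                  | t <- D mu]).
Hypothesis Hepsm : forall a b, eps (mmul a b) = eps a * eps b.
Hypothesis Heps1 : eps mone = 1.
Hypothesis Hcounit : forall mu,
  fc_eq [seq (t.1.2, eps t.1.1 * t.2) | t <- D mu] [:: (mu, 1)]
  /\ fc_eq [seq (t.1.1, eps t.1.2 * t.2) | t <- D mu] [:: (mu, 1)].
Hypothesis Hanti : forall mu,
   fc_eq (flatten [seq hmul mmul [seq (s.1, t.2 * s.2) | s <- S t.1.1] [:: (t.1.2, 1)]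
                         | t <- D mu]) [:: (mone, eps mu)]
   /\ fc_eq (flatten [seq hmul mmul [:: (t.1.1, t.2)] (S t.1.2) | t <- D mu])
                [:: (mone, eps mu)].

Lemma counit_l (V : lmodType K) (f : M -> V) mu :
  \sum_(t <- D mu) t.2 *: (eps t.1.1 *: f t.1.2) = f mu.
Proof.
have := Lsum_fc_eq f (Hcounit mu).1; rewrite Lsum1 scale1r Lsum_map => <-.
by apply: eq_bigr => t _ /=; rewrite scalerA mulrC.
Qed.

Lemma counit_r (V : lmodType K) (f : M -> V) mu :
  \sum_(t <- D mu) t.2 *: (eps t.1.2 *: f t.1.1) = f mu.
Proof.
have := Lsum_fc_eq f (Hcounit mu).2; rewrite Lsum1 scale1r Lsum_map => <-.
by apply: eq_bigr => t _ /=; rewrite scalerA mulrC.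
Qed.

Lemma conv_unit_l (phi : M -> B) : Defs.conv D (cunit B eps) phi = phi.
Proof.
apply: funext => mu; rewrite /Defs.conv /cunit -[RHS](counit_l phi mu).
by apply: eq_bigr => t _; rewrite -scalerAl mul1r.
Qed.

Lemma conv_unit_r (phi : M -> B) : Defs.conv D phi (cunit B eps) = phi.
Proof.
apply: funext => mu; rewrite /Defs.conv /cunit -[RHS](counit_r phi mu).
by apply: eq_bigr => t _; rewrite -scalerAr mulr1.
Qed.

Lemma conv_Lsum (phi psi : M -> B) mu :
  Defs.conv D phi psi mu = Lsum (fun p => phi p.1 * psi p.2) (D mu).
Proof. by []. Qed.

Lemma conv_mone (phi psi : M -> B) : Defs.conv D phi psi mone = phi mone * psi mone.
Proof. by rewrite conv_Lsum (Lsum_fc_eq _ HD1) Lsum1 scale1r. Qed.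

Lemma conv_mmul (phi psi : M -> B) a b :
  Defs.conv D phi psi (mmul a b) =
  \sum_(s <- D a) \sum_(u <- D b) (s.2 * u.2) *:
      (phi (mmul s.1.1 u.1.1) * psi (mmul s.1.2 u.1.2)).
Proof. by rewrite conv_Lsum (Lsum_fc_eq _ (HDm a b)) /tmul Lsum_allpairs. Qed.

Lemma cunit_char : is_character mmul mone (cunit B eps).
Proof.
apply/char_iff; split; first by rewrite /cunit Heps1 scale1r.
move=> x y; rewrite /cunit Hepsm -scalerAl -scalerAr mul1r scalerA; congr (_ *: _).
Qed.

Lemma conv_char (phi psi : M -> B) :
  is_character mmul mone phi -> is_character mmul mone psi ->
  is_character mmul mone (Defs.conv D phi psi).
Proof.
move=> /char_iff [p1 pm] /char_iff [q1 qm]; apply/char_iff; split.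
  by rewrite conv_mone p1 q1 mulr1.
move=> x y; rewrite conv_Lsum (Lsum_fc_eq _ (HDm x y)) /tmul.
apply: (@Lsum_allpairs_mul K B (M * M) (fun p q => (mmul p.1 q.1, mmul p.2 q.2))
  (fun p => phi p.1 * psi p.2)).
by move=> p q /=; rewrite pm qm; ring.
Qed.

Lemma compS_Lsum (phi : M -> B) mu : compS S phi mu = Lsum phi (S mu).
Proof. by []. Qed.

Lemma conv_compS_r (phi : M -> B) : is_character mmul mone phi ->
  Defs.conv D phi (compS S phi) = cunit B eps.
Proof.
move=> /char_iff [p1 pm]; apply: funext => mu.
have := Lsum_fc_eq phi (Hanti mu).2; rewrite Lsum1 p1 Lsum_flatten big_map.
rewrite /cunit => <-; rewrite conv_Lsum /Lsum; apply: eq_bigr => t _.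
rewrite /hmul -/(Lsum _ _) (@Lsum_allpairs_mul K B M mmul phi) //.
by rewrite Lsum1 -scalerAl.
Qed.

Lemma conv_compS_l (phi : M -> B) : is_character mmul mone phi ->
  Defs.conv D (compS S phi) phi = cunit B eps.
Proof.
move=> /char_iff [p1 pm]; apply: funext => mu.
have := Lsum_fc_eq phi (Hanti mu).1; rewrite Lsum1 p1 Lsum_flatten big_map.
rewrite /cunit => <-; rewrite conv_Lsum /Lsum; apply: eq_bigr => t _.
rewrite /hmul -/(Lsum _ _) (@Lsum_allpairs_mul K B M mmul phi) //.
rewrite Lsum1 scale1r compS_Lsum scalerAl; congr (_ * _).
rewrite Lsum_map /Lsum scaler_sumr; apply: eq_bigr => s _ /=.
by rewrite scalerA.
Qed.

End Hopf.


Section Hopf2.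
Variables (K : fieldType) (M : choiceType) (mmul : M -> M -> M) (mone : M).
Variable (B : comAlgType K).
Variables (D : M -> seq ((M * M) * K)) (eps : M -> K) (S : M -> seq (M * K)).

Hypothesis HDm : forall a b, fc_eq (D (mmul a b)) (tmul mmul (D a) (D b)).
Hypothesis HD1 : fc_eq (D mone) [:: ((mone, mone), 1)].
Hypothesis Hcoass : forall mu, fc_eq
         (flatten [seq [seq ((u.1.1, u.1.2, t.1.2), u.2 * t.2) | u <- D t.1.1]
                  | t <- D mu])
         (flatten [seq [seq ((t.1.1, v.1.1, v.1.2), t.2 * v.2) | v <- D t.1.2]
                  | t <- D mu]).
Hypothesis Hepsm : forall a b, eps (mmul a b) = eps a * eps b.
Hypothesis Heps1 : eps mone = 1.
Hypothesis Hcounit : forall mu,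
  fc_eq [seq (t.1.2, eps t.1.1 * t.2) | t <- D mu] [:: (mu, 1)]
  /\ fc_eq [seq (t.1.1, eps t.1.2 * t.2) | t <- D mu] [:: (mu, 1)].
Hypothesis Hanti : forall mu,
   fc_eq (flatten [seq hmul mmul [seq (s.1, t.2 * s.2) | s <- S t.1.1] [:: (t.1.2, 1)]
                         | t <- D mu]) [:: (mone, eps mu)]
   /\ fc_eq (flatten [seq hmul mmul [:: (t.1.1, t.2)] (S t.1.2) | t <- D mu])
                [:: (mone, eps mu)].


Definition conv2 (F G : M -> M -> B) a b :=
  \sum_(s <- D a) \sum_(u <- D b) (s.2 * u.2) *: (F s.1.1 u.1.1 * G s.1.2 u.1.2).

Definition LL mu := flatten [seq [seq ((u.1.1, u.1.2, t.1.2), u.2 * t.2) | u <- D t.1.1]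
                  | t <- D mu].
Definition RL mu := flatten [seq [seq ((t.1.1, v.1.1, v.1.2), t.2 * v.2) | v <- D t.1.2]
                  | t <- D mu].

Lemma Lsum_LL (V : lmodType K) (g : M * M * M -> V) mu :
  Lsum g (LL mu) = \sum_(t <- D mu) \sum_(u <- D t.1.1) (u.2 * t.2) *: g (u.1.1, u.1.2, t.1.2).
Proof. by rewrite /LL Lsum_flatten big_map; apply: eq_bigr => t _; rewrite Lsum_map. Qed.

Lemma Lsum_RL (V : lmodType K) (g : M * M * M -> V) mu :
  Lsum g (RL mu) = \sum_(t <- D mu) \sum_(v <- D t.1.2) (t.2 * v.2) *: g (t.1.1, v.1.1, v.1.2).
Proof. by rewrite /RL Lsum_flatten big_map; apply: eq_bigr => t _; rewrite Lsum_map. Qed.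

Definition Phi3 (F G H : M -> M -> B) (ta tb : M * M * M) :=
  F ta.1.1 tb.1.1 * G ta.1.2 tb.1.2 * H ta.2 tb.2.

Lemma assoc_l F G H a b :
  conv2 (conv2 F G) H a b = Lsum (fun ta => Lsum (Phi3 F G H ta) (LL b)) (LL a).
Proof.
rewrite Lsum_LL /conv2; apply: eq_bigr => t _.
under [RHS]eq_bigr => u _ do rewrite Lsum_LL scaler_sumr.
rewrite exchange_big /=; apply: eq_bigr => t' _.
rewrite mulr_suml scaler_sumr; apply: eq_bigr => u _.
rewrite mulr_suml scaler_sumr scaler_sumr; apply: eq_bigr => u' _.
rewrite /Phi3 /= -!scalerAl !scalerA; congr (_ *: _); ring.
Qed.

Lemma assoc_r F G H a b :
  conv2 F (conv2 G H) a b = Lsum (fun ta => Lsum (Phi3 F G H ta) (RL b)) (RL a).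
Proof.
rewrite Lsum_RL /conv2; apply: eq_bigr => t _.
under [RHS]eq_bigr => u _ do rewrite Lsum_RL scaler_sumr.
rewrite exchange_big /=; apply: eq_bigr => t' _.
rewrite mulr_sumr scaler_sumr; apply: eq_bigr => u _.
rewrite mulr_sumr scaler_sumr scaler_sumr; apply: eq_bigr => u' _.
rewrite /Phi3 /= -!scalerAr !scalerA mulrA; congr (_ *: _); ring.
Qed.

Lemma conv2A F G H : conv2 (conv2 F G) H = conv2 F (conv2 G H).
Proof.
apply: funext => a; apply: funext => b.
rewrite assoc_l assoc_r (Lsum_fc_eq _ (Hcoass a)); congr Lsum.
by apply: funext => ta; apply: Lsum_fc_eq; exact: Hcoass.
Qed.

Definition E2 (a b : M) : B := (eps a * eps b) *: 1.

Lemma conv2_unit_l G : conv2 E2 G = G.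
Proof.
apply: funext => a; apply: funext => b.
rewrite -[RHS](counit_l Hcounit (fun y => G y b) a) /conv2; apply: eq_bigr => s _.
rewrite -(counit_l Hcounit (G s.1.2) b) !scaler_sumr; apply: eq_bigr => u _.
rewrite /E2 -scalerAl mul1r !scalerA; congr (_ *: _); ring.
Qed.

Lemma conv2_unit_r G : conv2 G E2 = G.
Proof.
apply: funext => a; apply: funext => b.
rewrite -[RHS](counit_r Hcounit (fun y => G y b) a) /conv2; apply: eq_bigr => s _.
rewrite -(counit_r Hcounit (G s.1.1) b) !scaler_sumr; apply: eq_bigr => u _.
rewrite /E2 -scalerAr mulr1 !scalerA; congr (_ *: _); ring.
Qed.

Lemma compS_char (phi : M -> B) : is_character mmul mone phi ->
  is_character mmul mone (compS S phi).
Proof.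
move=> phic; have /char_iff [p1 pm] := phic.
set psi := compS S phi.
have hr := conv_compS_r Hanti phic; have hl := conv_compS_l Hanti phic.
apply/char_iff; split.
  by have := f_equal (fun f => f mone) hr; rewrite /= conv_mone // p1 mul1r /cunit Heps1 scale1r.
pose F1 a b := psi (mmul a b).
pose F2 a b := psi a * psi b.
pose Ph a b := phi a * phi b.
have h1 : conv2 Ph F1 = E2.
  apply: funext => a; apply: funext => b.
  have := f_equal (fun f => f (mmul a b)) hr; rewrite /= conv_mmul // /cunit Hepsm /E2 => <-.
  by apply: eq_bigr => s _; apply: eq_bigr => u _; rewrite pm.
have h2 : conv2 F2 Ph = E2.
  apply: funext => a; apply: funext => b.
  have := f_equal (fun f => f a) hl; have := f_equal (fun f => f b) hl.
  rewrite /= /E2 /cunit => eb ea.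
  have -> : (eps a * eps b) *: (1:B) = (eps a *: 1) * (eps b *: 1).
    by rewrite -scalerAl mul1r scalerA.
  rewrite -ea -eb /Defs.conv /conv2.
  rewrite mulr_suml; apply: eq_bigr => s _; rewrite mulr_sumr; apply: eq_bigr => u _.
  rewrite /F2 /Ph -scalerAl -scalerAr !scalerA; congr (_ *: _); rewrite /psi; ring.
move=> x y.
have := f_equal (fun f => f x y) (conv2_unit_l F1).
rewrite -h2 conv2A h1 conv2_unit_r /F2 /F1 => <-.
by [].
Qed.

End Hopf2.


Section Hopf3.
Variables (K : fieldType) (M : choiceType) (mmul : M -> M -> M) (mone : M).
Variable (B : comAlgType K).
Variables (D : M -> seq ((M * M) * K)) (eps : M -> K) (S : M -> seq (M * K)).

Hypothesis HDm : forall a b, fc_eq (D (mmul a b)) (tmul mmul (D a) (D b)).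
Hypothesis HD1 : fc_eq (D mone) [:: ((mone, mone), 1)].
Hypothesis Hcoass : forall mu, fc_eq
         (flatten [seq [seq ((u.1.1, u.1.2, t.1.2), u.2 * t.2) | u <- D t.1.1]
                  | t <- D mu])
         (flatten [seq [seq ((t.1.1, v.1.1, v.1.2), t.2 * v.2) | v <- D t.1.2]
                  | t <- D mu]).
Hypothesis Hepsm : forall a b, eps (mmul a b) = eps a * eps b.
Hypothesis Heps1 : eps mone = 1.
Hypothesis Hcounit : forall mu,
  fc_eq [seq (t.1.2, eps t.1.1 * t.2) | t <- D mu] [:: (mu, 1)]
  /\ fc_eq [seq (t.1.1, eps t.1.2 * t.2) | t <- D mu] [:: (mu, 1)].
Hypothesis Hanti : forall mu,
   fc_eq (flatten [seq hmul mmul [seq (s.1, t.2 * s.2) | s <- S t.1.1] [:: (t.1.2, 1)]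
                         | t <- D mu]) [:: (mone, eps mu)]
   /\ fc_eq (flatten [seq hmul mmul [:: (t.1.1, t.2)] (S t.1.2) | t <- D mu])
                [:: (mone, eps mu)].



Lemma scaleMM (k l : K) (x y : B) : (k *: x) * (l *: y) = (k * l) *: (x * y).
Proof. by rewrite -scalerAl -scalerAr scalerA. Qed.

Lemma conv_inf_mmul (phi psi : M -> B) a b :
  (forall x y, phi (mmul x y) = eps y *: phi x + eps x *: phi y) ->
  (forall x y, psi (mmul x y) = eps y *: psi x + eps x *: psi y) ->
  Defs.conv D phi psi (mmul a b) =
    eps b *: Defs.conv D phi psi a + phi a * psi b + psi a * phi b
    + eps a *: Defs.conv D phi psi b.
Proof.
move=> hp hq.
have eb : \sum_(u <- D b) u.2 * (eps u.1.1 * eps u.1.2) = eps b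
  := counit_l (V := K^o) Hcounit eps b.
have ea : \sum_(u <- D a) u.2 * (eps u.1.1 * eps u.1.2) = eps a
  := counit_l (V := K^o) Hcounit eps a.
have t1 : eps b *: Defs.conv D phi psi a = \sum_(s <- D a) \sum_(u <- D b)
    (s.2 * u.2 * (eps u.1.1 * eps u.1.2)) *: (phi s.1.1 * psi s.1.2).
  rewrite -eb /Defs.conv scaler_suml.
  under eq_bigr => u _ do rewrite scaler_sumr.
  rewrite exchange_big; apply: eq_bigr => s' _; apply: eq_bigr => u _.
  by rewrite scalerA; congr (_ *: _); ring.
have t2 : phi a * psi b = \sum_(s <- D a) \sum_(u <- D b)
    (s.2 * u.2 * (eps u.1.1 * eps s.1.2)) *: (phi s.1.1 * psi u.1.2).
  rewrite -(counit_r Hcounit phi a) -(counit_l Hcounit psi b) mulr_suml.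
  apply: eq_bigr => s' _; rewrite mulr_sumr; apply: eq_bigr => u _.
  by rewrite !scaleMM scalerA; congr (_ *: _); ring.
have t3 : psi a * phi b = \sum_(s <- D a) \sum_(u <- D b)
    (s.2 * u.2 * (eps s.1.1 * eps u.1.2)) *: (phi u.1.1 * psi s.1.2).
  rewrite -(counit_l Hcounit psi a) -(counit_r Hcounit phi b) mulr_suml.
  apply: eq_bigr => s' _; rewrite mulr_sumr; apply: eq_bigr => u _.
  by rewrite !scaleMM scalerA [phi _ * _]mulrC; congr (_ *: _); ring.
have t4 : eps a *: Defs.conv D phi psi b = \sum_(s <- D a) \sum_(u <- D b)
    (s.2 * u.2 * (eps s.1.1 * eps s.1.2)) *: (phi u.1.1 * psi u.1.2).
  rewrite -ea /Defs.conv scaler_suml; apply: eq_bigr => s' _.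
  rewrite scaler_sumr; apply: eq_bigr => u _.
  by rewrite scalerA; congr (_ *: _); ring.
rewrite conv_mmul // t1 t2 t3 t4 -!big_split; apply: eq_bigr => s' _.
rewrite -!big_split; apply: eq_bigr => u _ /=.
rewrite hp hq mulrDl !mulrDr !scaleMM !scalerDr !scalerA !addrA.
by congr (_ + _ + _ + _); congr (_ *: _); ring.
Qed.

Lemma bracket_inf (phi psi : M -> B) :
  is_inf_character mmul eps phi -> is_inf_character mmul eps psi ->
  is_inf_character mmul eps (fun mu => Defs.conv D phi psi mu - Defs.conv D psi phi mu).
Proof.
move=> /inf_char_iff hp /inf_char_iff hq; apply/inf_char_iff => x y.
rewrite !conv_inf_mmul // !scalerBr.
have gen : forall (a1 a2 p q c1 c2 : B),
  a1 + p + q + c1 - (a2 + q + p + c2) = (a1 - a2) + (c1 - c2).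
  by move=> *; ring.
by rewrite gen.
Qed.


End Hopf3.

Local Open Scope classical_set_scope.


Section Esum.
Variables (R : realType) (K : fieldType) (absK : K -> R).
Hypothesis absK0 : absK 0 = 0.
Hypothesis absK_ge0 : forall x, 0 <= absK x.
Variable omega : nat -> nat -> nat.

Lemma l1_sum_ge (J : choiceType) (g : J -> nat) k (c : J -> K) (s : seq J) : uniq s ->
  ((\sum_(x <- s) absK (c x) * (omega k (g x))%:R)%:E <= l1_sum absK omega g k c)%E.
Proof.
move=> us; rewrite /l1_sum; apply: esum_ge; exists [set` s].
  by split; [exact: finite_seq | by []].
by rewrite -sumEFin fsbig_seq.
Qed.

Lemma l1_sum_ge0 (J : choiceType) (g : J -> nat) k (c : J -> K) :
  (0 <= l1_sum absK omega g k c)%E.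
Proof. by apply: esum_ge0 => x _; rewrite lee_fin mulr_ge0. Qed.

Lemma l1_sum_single (J : choiceType) (g : J -> nat) k (c : J -> K) (mu : J) :
  (forall t, t != mu -> c t = 0) ->
  l1_sum absK omega g k c = (absK (c mu) * (omega k (g mu))%:R)%:E.
Proof.
move=> c0; rewrite /l1_sum.
transitivity (\esum_(t in [set: J]) (if t \in [set mu] then
    (absK (c t) * (omega k (g t))%:R)%:E else 0%E)).
  apply: eq_esum => t _; case: ifP => // /negbT => tmu.
  have tm : t != mu by apply: contraNneq tmu => ->; exact: mem_set.
  by rewrite c0 ?absK0 ?mul0r.
by rewrite -esum_mkcond esum_set1 // lee_fin mulr_ge0.
Qed.

Lemma l1_single (J : choiceType) (g : J -> nat) (c : J -> K) (mu : J) :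
  (forall t, t != mu -> c t = 0) -> l1 absK omega g c.
Proof. by move=> c0 k; rewrite (l1_sum_single _ _ c0) ltry. Qed.

Lemma l1_norm_single (J : choiceType) (g : J -> nat) k (c : J -> K) (mu : J) :
  (forall t, t != mu -> c t = 0) ->
  l1_norm absK omega g k c = absK (c mu) * (omega k (g mu))%:R.
Proof. by move=> c0; rewrite /l1_norm (l1_sum_single _ _ c0). Qed.

Lemma l1_norm_ge (J : choiceType) (g : J -> nat) k (c : J -> K) (s : seq J) :
  uniq s -> l1 absK omega g c ->
  \sum_(x <- s) absK (c x) * (omega k (g x))%:R <= l1_norm absK omega g k c.
Proof.
move=> us hc; rewrite /l1_norm -lee_fin fineK ?l1_sum_ge //.
by rewrite ge0_fin_numE ?l1_sum_ge0 ?hc.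
Qed.

End Esum.


Section Ctrl.
Variables (R : realType) (K : fieldType) (absK : K -> R).
Hypothesis absK0 : absK 0 = 0.
Hypothesis absK_ge0 : forall x, 0 <= absK x.
Hypothesis absKM : forall x y, absK (x * y) = absK x * absK y.
Variable emb : R -> K.
Hypothesis absK_emb : forall r, 0 <= r -> absK (emb r) = r.
Variable omega : nat -> nat -> nat.
Hypothesis omega_gt0 : forall k n, (0 < omega k n)%N.

Lemma control_bound (J1 J2 : choiceType) (g1 : J1 -> nat) (g2 : J2 -> nat)
   (T : (J1 -> K) -> (J2 -> K)) (c : J1 -> J2 -> K) :
  l1_cont_linear absK omega g1 g2 T -> (forall mu, T (@kdelta K _ mu) = c mu) ->
  forall k, exists k' (C : R), 0 < C /\ forall mu (s : seq J2), uniq s ->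
    \sum_(x <- s) absK (c mu x) * (omega k (g2 x))%:R <= C * (omega k' (g1 mu))%:R.
Proof.
case=> l1T lin cont Tc k.
have l0 : l1 absK omega g1 (fun _ => 0).
  move=> k0; rewrite /l1_sum esum1 ?ltry // => t _.
  by rewrite absK0 mul0r.
have T0 : T (fun _ => 0) = (fun _ => 0).
  have := lin 1 (fun _ => 0) (fun _ => 0) l0 l0.
  have -> : (fun t : J1 => 1 * (fun _ : J1 => (0:K)) t + (fun _ => 0) t) = (fun _ => 0).
    by apply: funext => t; rewrite mulr0 addr0.
  move=> h; apply: funext => t; have := f_equal (fun f => f t) h.
  by rewrite /= mul1r -{1}[T _ t]addr0 => /addrI <-.
have [k' [d [d0 hd]]] := cont (fun _ => 0) l0 k 1 ltr01.
exists k', (2 / d); split; first by rewrite divr_gt0.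
move=> mu s us.
set w : R := (omega k' (g1 mu))%:R.
have w0 : 0 < w by rewrite ltr0n.
set y := d / (2 * w).
have y0 : 0 < y by rewrite divr_gt0 // mulr_gt0.
set a := emb y.
have aa : absK a = y by rewrite absK_emb // ltW.
have kd0 : forall t, t != mu -> @kdelta K _ mu t = 0 by move=> t; rewrite /kdelta => /negbTE ->.
set cc := fun t => a * @kdelta K _ mu t + (fun _ : J1 => 0) t.
have cc0 : forall t, t != mu -> cc t = 0.
  by move=> t /kd0; rewrite /cc => ->; rewrite mulr0 addr0.
have lcc : l1 absK omega g1 cc := l1_single absK0 absK_ge0 omega g1 cc0.
have lkd : l1 absK omega g1 (@kdelta K _ mu) := l1_single absK0 absK_ge0 omega g1 kd0.
have Tcc : T cc = fun t => a * c mu t + 0.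
  by rewrite /cc (lin a (@kdelta K _ mu) (fun _ => 0) lkd l0) Tc T0.
have e1 : (fun t => T cc t - T (fun _ => 0) t) = (fun t => a * c mu t).
  by apply: funext => t; rewrite Tcc T0 subr0 addr0.
have lT : l1 absK omega g2 (fun t => a * c mu t).
  by have := l1T cc lcc; rewrite Tcc; under eq_fun do rewrite addr0.
have := hd cc lcc; rewrite e1.
have cc0' : forall t, t != mu -> (fun t => cc t - (fun _ : J1 => 0) t) t = 0.
  by move=> t /cc0 /= ->; rewrite subr0.
rewrite (l1_norm_single absK0 absK_ge0 omega g1 k' cc0') /= /cc /kdelta eqxx.
rewrite mulr1 !addr0 subr0 aa -/w.
have yw : y * w = d / 2.
  by rewrite /y; field; rewrite ?gt_eqF.
rewrite yw => /(_ _) hl.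
have {hl} hl : l1_norm absK omega g2 k (fun t : J2 => a * c mu t) < 1.
  by apply: hl; rewrite ltr_pdivrMr // ltr_pMr // ltr1n.
have := l1_norm_ge absK_ge0 k us lT.
move=> hle.
set X := \sum_(x <- s) absK (c mu x) * _.
have e3 : \sum_(x <- s) absK (a * c mu x) * (omega k (g2 x))%:R = y * X.
  by rewrite /X mulr_sumr; apply: eq_bigr => x _; rewrite absKM aa mulrA.
have hX : y * X < 1 by rewrite -e3; apply: le_lt_trans hl.
have e2 : y * (2 / d * w) = 1 by rewrite /y; field; rewrite ?gt_eqF.
nra.
Qed.

End Ctrl.


Section LinfB.
Variables (R : realType) (K : fieldType) (absK : K -> R).
Hypothesis absK0 : absK 0 = 0.
Hypothesis absK_ge0 : forall x, 0 <= absK x.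
Hypothesis absKM : forall x y, absK (x * y) = absK x * absK y.
Hypothesis absK1 : absK 1 = 1.
Hypothesis absKN1 : absK (-1) = 1.
Variables (M : choiceType) (msz : M -> nat) (B : comAlgType K) (nB : B -> R).
Variable omega : nat -> nat -> nat.
Hypothesis hB : banach_algebra_norm absK nB.
Hypothesis hgf : growth_family omega.

Lemma half_contra (z : R) : 0 < z -> z <= z / 2 -> False.
Proof. move=> *; lra. Qed.

Lemma nB_ge0 x : 0 <= nB x. Proof. by case: hB => [[h _] _ _ _ _]; apply: h. Qed.
Lemma nB_eq0 x : nB x = 0 -> x = 0. Proof. by case: hB => [[_ h] _ _ _ _]; apply: h. Qed.
Lemma nB_tri x y : nB (x + y) <= nB x + nB y. Proof. by case: hB => _ h _ _ _; apply: h. Qed.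
Lemma nB_scale a x : nB (a *: x) = absK a * nB x. Proof. by case: hB => _ _ h _ _; apply: h. Qed.
Lemma nB_mul x y : nB (x * y) <= nB x * nB y. Proof. by case: hB => _ _ _ [h _] _; apply: h. Qed.
Lemma nB1 : nB 1 = 1. Proof. by case: hB => _ _ _ [_ h] _. Qed.
Lemma nB0 : nB 0 = 0. Proof. by rewrite -(scale0r (0:B)) nB_scale absK0 mul0r. Qed.
Lemma nBN x : nB (- x) = nB x. Proof. by rewrite -scaleN1r nB_scale absKN1 mul1r. Qed.
Lemma nB_gt0 x : x != 0 -> 0 < nB x.
Proof. by move=> x0; rewrite lt_neqAle nB_ge0 andbT eq_sym; apply: contra x0 => /eqP/nB_eq0 ->. Qed.

Lemma nB_sum (I : Type) (r : seq I) (F : I -> B) :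
  nB (\sum_(i <- r) F i) <= \sum_(i <- r) nB (F i).
Proof.
elim: r => [|i r IH]; first by rewrite !big_nil nB0.
by rewrite !big_cons (le_trans (nB_tri _ _)) // lerD2l.
Qed.

Lemma omega_gt0 k n : (0 < omega k n)%N. Proof. by case: hgf => h _ _ _ _; apply: h. Qed.
Lemma omega_mono k k' n : (k <= k')%N -> (omega k n <= omega k' n)%N.
Proof.
elim: k' => [|k' IH]; first by rewrite leqn0 => /eqP ->.
rewrite leq_eqVlt => /orP[/eqP -> //|]; rewrite ltnS => /IH h.
by apply: leq_trans h _; case: hgf => _ _ W1 _ _; apply: W1.
Qed.
Lemma omega_mul k n m : (omega k n * omega k m <= omega k (n + m))%N.
Proof. by case: hgf => _ _ _ h _; apply: h. Qed.
Lemma omegaR_gt0 k n : 0 < (omega k n)%:R :> R. Proof. by rewrite ltr0n omega_gt0. Qed.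

Notation kb := (kball msz nB omega).
Notation lf := (linf msz nB omega).

Lemma kball_r_ge0 k r phi (mu : M) : kb k r phi -> 0 <= r.
Proof.
move=> /(_ mu) h; have := le_trans (nB_ge0 _) h.
by rewrite pmulr_lge0 // omegaR_gt0.
Qed.

Lemma kball_mono k k' r r' phi : kb k r phi -> (k <= k')%N -> r <= r' -> kb k' r' phi.
Proof.
move=> h kk rr mu; have r0 := kball_r_ge0 mu h.
apply: (le_trans (h mu)); apply: ler_pM => //.
by rewrite ler_nat omega_mono.
Qed.

Lemma linf_combo a b x y : lf x -> lf y -> lf (fun mu => a *: x mu + b *: y mu).
Proof.
move=> [k1 [r1 h1]] [k2 [r2 h2]].
exists (maxn k1 k2), (absK a * `|r1| + absK b * `|r2|) => mu.
have h1' := kball_mono h1 (leq_maxl k1 k2) (ler_norm r1).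
have h2' := kball_mono h2 (leq_maxr k1 k2) (ler_norm r2).
apply: (le_trans (nB_tri _ _)); rewrite !nB_scale mulrDl -!mulrA.
by apply: lerD; apply: ler_wpM2l.
Qed.

Lemma linf_add x y : lf x -> lf y -> lf (fun mu => x mu + y mu).
Proof.
move=> hx hy; have := linf_combo 1 1 hx hy.
by under eq_fun do rewrite !scale1r.
Qed.

Lemma linf_scale_add a x y : lf x -> lf y -> lf (fun mu => a *: x mu + y mu).
Proof.
move=> hx hy; have := linf_combo a 1 hx hy.
by under eq_fun do rewrite !scale1r.
Qed.

Lemma linf_sub x y : lf x -> lf y -> lf (fun mu => x mu - y mu).
Proof.
move=> hx hy; have := linf_combo 1 (-1) hx hy.
by under eq_fun do rewrite scale1r scaleN1r.
Qed.

Lemma linf0 : lf (fun _ => 0).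
Proof. by exists 0%N, 0 => mu; rewrite nB0 mul0r. Qed.

Lemma nB_Lsum (X : choiceType) (f : X -> B) (l : seq (X * K)) :
  nB (Lsum f l) <= \sum_(x <- undup (map fst l)) absK (coef l x) * nB (f x).
Proof.
rewrite (@Lsum_coef K B X f l (undup (map fst l))) ?undup_uniq //; last first.
  by move=> y; rewrite mem_undup.
apply: (le_trans (nB_sum _ _)); apply: ler_sum => x _; rewrite nB_scale //.
Qed.

Lemma leq_sum_mem (s : seq M) (f : M -> nat) mu : mu \in s -> (f mu <= \sum_(m <- s) f m)%N.
Proof.
elim: s => [|m s IH] //; rewrite inE big_cons => /orP[/eqP ->|/IH h].
  exact: leq_addr.
by apply: leq_trans h (leq_addl _ _).
Qed.

Lemma closed_crit (C : set (M -> B)) : C `<=` lf ->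
  (forall phi, lf phi -> ~ C phi -> exists (mus : seq M) (d : R), 0 < d /\
     forall psi, lf psi -> (forall mu, mu \in mus -> nB (psi mu) <= d) ->
       ~ C (fun mu => phi mu + psi mu)) ->
  linf_closed absK msz nB omega C.
Proof.
move=> Csub crit; split => //; split; first by move=> phi [].
move=> phi [lphi nC]; have [mus [d [d0 hd]]] := crit phi lphi nC.
exists (fun psi => lf psi /\ forall mu, mu \in mus -> nB (psi mu) <= d); split; last first.
  by move=> psi [lpsi hpsi]; split; [exact: linf_add | exact: hd].
split.
- by move=> psi [].
- move=> a b x y hab [lx hx] [ly hy]; split; first exact: linf_combo.
  move=> mu mumus; apply: le_trans (nB_tri _ _) _; rewrite !nB_scale.
  have := hx mu mumus; have := hy mu mumus; have := absK_ge0 a; have := absK_ge0 b.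
  have := nB_ge0 (x mu); have := nB_ge0 (y mu); nra.
- move=> k; set W0 := (\sum_(m <- mus) omega k (msz m))%N.
  have W0p : 0 < (W0.+1)%:R :> R by rewrite ltr0n.
  exists (d / (W0.+1)%:R); split; first by rewrite divr_gt0.
  move=> psi hpsi; split; first by exists k, (d / (W0.+1)%:R).
  move=> mu mumus; apply: le_trans (hpsi mu) _.
  have : (omega k (msz mu) <= W0.+1)%N.
    by apply: leqW; apply: (leq_sum_mem (fun m => omega k (msz m))).
  rewrite -(ler_nat R) => hw.
  rewrite mulrAC ler_pdivrMr // ler_pM2l //.
Qed.

Variables (mmul : M -> M -> M) (mone : M).
Variables (D : M -> seq ((M * M) * K)) (eps : M -> K) (S : M -> seq (M * K)).

Lemma linf_conv (phi psi : M -> B) :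
  (forall k, exists k' (C : R), 0 < C /\ forall mu (s : seq (M * M)), uniq s ->
    \sum_(x <- s) absK (coef (D mu) x) * (omega k (pair_deg msz x))%:R
      <= C * (omega k' (msz mu))%:R) ->
  lf phi -> lf psi -> lf (Defs.conv D phi psi).
Proof.
move=> hD [k1 [r1 h1]] [k2 [r2 h2]].
have [k' [C [C0 hC]]] := hD (maxn k1 k2).
exists k', (`|r1| * `|r2| * C) => mu.
have h1' := kball_mono h1 (leq_maxl k1 k2) (ler_norm r1).
have h2' := kball_mono h2 (leq_maxr k1 k2) (ler_norm r2).
have -> : Defs.conv D phi psi mu = Lsum (fun p => phi p.1 * psi p.2) (D mu) by [].
apply: le_trans (nB_Lsum _ _) _.
apply: (@le_trans _ _ (`|r1| * `|r2| * \sum_(x <- undup (map fst (D mu)))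
    absK (coef (D mu) x) * (omega (maxn k1 k2) (pair_deg msz x))%:R)).
  rewrite mulr_sumr; apply: ler_sum => p _.
  rewrite mulrCA; apply: ler_wpM2l => //.
  apply: le_trans (nB_mul _ _) _.
  apply: (@le_trans _ _ ((`|r1| * (omega (maxn k1 k2) (msz p.1))%:R) *
                         (`|r2| * (omega (maxn k1 k2) (msz p.2))%:R))).
    by apply: ler_pM => //; rewrite ?nB_ge0.
  rewrite mulrACA; apply: ler_wpM2l; first by rewrite mulr_ge0.
  by rewrite -natrM ler_nat omega_mul.
rewrite [X in _ <= X](_ : _ = (`|r1| * `|r2|) * (C * (omega k' (msz mu))%:R)); last by rewrite !mulrA.
apply: ler_wpM2l; first by rewrite mulr_ge0.
by apply: hC; rewrite undup_uniq.
Qed.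

Lemma linf_compS (phi : M -> B) :
  (forall k, exists k' (C : R), 0 < C /\ forall mu (s : seq M), uniq s ->
    \sum_(x <- s) absK (coef (S mu) x) * (omega k (msz x))%:R
      <= C * (omega k' (msz mu))%:R) ->
  lf phi -> lf (compS S phi).
Proof.
move=> hS [k1 [r1 h1]].
have [k' [C [C0 hC]]] := hS k1.
exists k', (`|r1| * C) => mu.
have h1' := kball_mono h1 (leqnn k1) (ler_norm r1).
have -> : compS S phi mu = Lsum phi (S mu) by [].
apply: le_trans (nB_Lsum _ _) _.
apply: (@le_trans _ _ (`|r1| * \sum_(x <- undup (map fst (S mu)))
    absK (coef (S mu) x) * (omega k1 (msz x))%:R)).
  rewrite mulr_sumr; apply: ler_sum => p _.
  by rewrite mulrCA; apply: ler_wpM2l.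
rewrite -mulrA; apply: ler_wpM2l => //.
by apply: hC; rewrite undup_uniq.
Qed.

Lemma linf_cunit :
  (forall mu, msz mu != 0%N -> eps mu = 0) -> (forall mu, msz mu = 0%N -> mu = mone) ->
  eps mone = 1 -> lf (cunit B eps).
Proof.
move=> h2 h3 e1; exists 0%N, 1 => mu; rewrite /cunit nB_scale nB1 mulr1 mul1r.
case: (eqVneq (msz mu) 0%N) => [/h3 ->|/h2 ->]; rewrite ?e1 ?absK1 ?absK0.
  by rewrite ler1n omega_gt0.
by rewrite ler0n.
Qed.

Lemma Gctr_closed : linf_closed absK msz nB omega (Gctr mmul mone msz nB omega).
Proof.
apply: closed_crit; first by move=> phi [].
move=> phi lphi nG.
have nc : ~ is_character mmul mone phi by move=> c; apply: nG.
case: (eqVneq (phi mone) 1) => [p1|p1].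
  have [[x [y hxy]]|nex] := pselect (exists x y, phi (mmul x y) != phi x * phi y); last first.
    exfalso; apply: nc; apply/char_iff; split => // x y.
    by apply/eqP/negP => h; apply: nex; exists x, y; apply/negP.
  set E := phi (mmul x y) - phi x * phi y.
  have eta0 : 0 < nB E by apply: nB_gt0; rewrite subr_eq0.
  set Q := nB (phi x) + nB (phi y) + 2.
  have Q0 : 0 < Q by rewrite /Q; have := nB_ge0 (phi x); have := nB_ge0 (phi y); lra.
  set t := nB E / (2 * Q).
  have tQ : t * Q = nB E / 2 by rewrite /t; field; rewrite gt_eqF.
  have t0 : 0 < t by rewrite divr_gt0 // mulr_gt0.
  set d := Num.min 1 t.
  have d1 : d <= 1 by rewrite /d ge_min lexx.
  have dt : d <= t by rewrite /d ge_min lexx orbT.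
  have d0 : 0 < d by rewrite /d lt_min ltr01 t0.
  exists [:: mmul x y; x; y], d; split => // psi lpsi hpsi [_ /char_iff [_ hm]].
  have := hm x y => /= hxy2.
  have eE : E = phi x * psi y + psi x * phi y + psi x * psi y - psi (mmul x y).
    rewrite /E; apply/eqP; rewrite -subr_eq0; apply/eqP.
    have : phi (mmul x y) + psi (mmul x y) - (phi x + psi x) * (phi y + psi y) = 0.
      by rewrite hxy2 subrr.
    move=> <-; ring.
  have bxy := hpsi (mmul x y) (mem_head _ _).
  have bx : nB (psi x) <= d by apply: hpsi; rewrite !inE eqxx orbT.
  have by_ : nB (psi y) <= d by apply: hpsi; rewrite !inE eqxx !orbT.
  have : nB E <= nB (phi x) * d + d * nB (phi y) + d * d + d.
    rewrite eE; apply: le_trans (nB_tri _ _) _; rewrite nBN.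
    apply: lerD => //; apply: le_trans (nB_tri _ _) _.
    apply: lerD; last by apply: le_trans (nB_mul _ _) _; apply: ler_pM => //; rewrite ?nB_ge0.
    apply: le_trans (nB_tri _ _) _; apply: lerD.
      by apply: le_trans (nB_mul _ _) _; apply: ler_pM => //; rewrite ?nB_ge0.
    by apply: le_trans (nB_mul _ _) _; apply: ler_pM => //; rewrite ?nB_ge0.
  have := nB_ge0 (phi x); have := nB_ge0 (phi y); rewrite /Q in tQ.
  nra.
set E := phi mone - 1.
have eta0 : 0 < nB E by apply: nB_gt0; rewrite subr_eq0.
exists [:: mone], (nB E / 2); split; first by rewrite divr_gt0.
move=> psi lpsi hpsi [_ /char_iff [h1 _]].
have bm := hpsi mone (mem_head _ _).
have : E = - psi mone by rewrite /E -h1 /=; ring.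
move=> eE; rewrite eE nBN in eta0 bm; exact: half_contra eta0 bm.
Qed.

Lemma gctr_closed : linf_closed absK msz nB omega (gctr mmul msz nB omega eps).
Proof.
apply: closed_crit; first by move=> phi [].
move=> phi lphi nG.
have nc : ~ is_inf_character mmul eps phi by move=> c; apply: nG.
have [[x [y hxy]]|nex] := pselect (exists x y,
   phi (mmul x y) != eps y *: phi x + eps x *: phi y); last first.
  exfalso; apply: nc; apply/inf_char_iff => x y.
  by apply/eqP/negP => h; apply: nex; exists x, y; apply/negP.
set Ef := fun f : M -> B => f (mmul x y) - (eps y *: f x + eps x *: f y).
have eta0 : 0 < nB (Ef phi) by apply: nB_gt0; rewrite subr_eq0.
set Q := 1 + absK (eps y) + absK (eps x).
have Q0 : 0 < Q by rewrite /Q; have := absK_ge0 (eps x); have := absK_ge0 (eps y); lra.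
set d := nB (Ef phi) / (2 * Q).
have dQ : d * Q = nB (Ef phi) / 2 by rewrite /d; field; rewrite gt_eqF.
have d0 : 0 < d by rewrite divr_gt0 // mulr_gt0.
exists [:: mmul x y; x; y], d; split => // psi lpsi hpsi [_ /inf_char_iff hm].
have bxy := hpsi (mmul x y) (mem_head _ _).
have bx : nB (psi x) <= d by apply: hpsi; rewrite !inE eqxx orbT.
have by_ : nB (psi y) <= d by apply: hpsi; rewrite !inE eqxx !orbT.
have eE : Ef phi = - Ef psi.
  have := hm x y; rewrite /Ef /= !scalerDr => e.
  apply/eqP; rewrite -subr_eq0 opprK; apply/eqP.
  have -> : phi (mmul x y) = eps y *: phi x + eps y *: psi x + (eps x *: phi y + eps x *: psi y) - psi (mmul x y).
    by rewrite -e; ring.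
  ring.
have : nB (Ef psi) <= d + absK (eps y) * d + absK (eps x) * d.
  rewrite /Ef; apply: le_trans (nB_tri _ _) _; rewrite nBN -addrA; apply: lerD => //.
  apply: le_trans (nB_tri _ _) _; rewrite !nB_scale.
  by apply: lerD; apply: ler_wpM2l.
rewrite eE nBN in eta0 dQ *; rewrite /Q in dQ.
have := absK_ge0 (eps x); have := absK_ge0 (eps y).
clear hxy; nra.
Qed.

End LinfB.


Theorem gen_main (R : realType) (K : fieldType) (absK : K -> R)
  (absK0 : absK 0 = 0) (absK_ge0 : forall x, 0 <= absK x)
  (absKM : forall x y, absK (x * y) = absK x * absK y)
  (absK1 : absK 1 = 1) (absKN1 : absK (-1) = 1)
  (emb : R -> K) (absK_emb : forall r, 0 <= r -> absK (emb r) = r)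
  (M : choiceType) (mmul : M -> M -> M) (mone : M) (msz : M -> nat) :
  lemma3p10_stmt absK mmul mone msz.
Proof.
move=> B nB omega D eps S hB [hgf _] hopf [[TD [hTD eTD]] [TS [hTS eTS]]].
case: hopf => [[HDm HD1] Hcoass [[Hepsm Heps1] Hcounit] Hanti [Hgr1 Hgr2 Hgr3]].
have ogt0 : forall k n, (0 < omega k n)%N by case: hgf.
have hD := control_bound absK0 absK_ge0 absKM absK_emb ogt0 hTD eTD.
have hS := control_bound absK0 absK_ge0 absKM absK_emb ogt0 hTS eTS.
have lconv : forall phi psi, linf msz nB omega phi -> linf msz nB omega psi ->
    linf msz nB omega (Defs.conv D phi psi).
  by move=> phi psi; apply: (linf_conv absK0 absK_ge0 hB hgf hD).
have lcompS : forall phi, linf msz nB omega phi -> linf msz nB omega (compS S phi).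
  by move=> phi; apply: (linf_compS absK0 absK_ge0 hB hgf hS).
split; split.
- split; first by move=> phi _; split; [exact: conv_unit_l | exact: conv_unit_r].
  split; first exact: (linf_cunit absK0 absK1 hB hgf Hgr2 Hgr3 Heps1).
  exact: cunit_char.
- move=> phi [lphi cphi]; split => //; exists (compS S phi); split; first exact: lcompS.
  by split; [exact: conv_compS_r | exact: conv_compS_l].
- move=> phi psi [lphi cphi] [lpsi cpsi]; split; first exact: lconv.
  exact: conv_char.
- move=> phi [lphi cphi]; split.
  + by split; [exact: lcompS | exact: (compS_char HDm HD1 Hcoass Hepsm Heps1 Hcounit Hanti)].
  + exact: conv_compS_r.
  + exact: conv_compS_l.
- exists (Gctr mmul mone msz nB omega); split.
    exact: (Gctr_closed absK_ge0 absKN1 msz hB hgf).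
  apply/seteqP; split => phi; first by move=> h; split => //; move: h => [lphi cphi];
    split => //; exists (compS S phi); split; [exact: lcompS | split;
      [exact: conv_compS_r | exact: conv_compS_l]].
  by case.
- split; first exact: (linf0 absK0 msz omega hB).
  by apply/inf_char_iff => x y; rewrite /= !scaler0 addr0.
- move=> a phi psi [lphi hp] [lpsi hq]; split; first exact: (linf_scale_add absK_ge0 hB hgf).
  move/inf_char_iff: hp => hp; move/inf_char_iff: hq => hq.
  apply/inf_char_iff => x y; rewrite hp hq !scalerDr !scalerA.
  rewrite (mulrC a (eps y)) (mulrC a (eps x)).
  set u1 := (eps y * a) *: phi x; set u2 := (eps x * a) *: phi y.
  set v1 := eps y *: psi x; set v2 := eps x *: psi y.
  by rewrite !addrA; congr (_ + _); rewrite -!addrA; congr (_ + _); rewrite addrC.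
- move=> phi psi [lphi hp] [lpsi hq]; split.
    by apply: (linf_sub absK_ge0 hB hgf); apply: lconv.
  exact: bracket_inf.
- exact: (gctr_closed absK_ge0 absKN1 msz hB hgf).
Qed.



Lemma gen_real (R : realType) (M : choiceType) (mmul : M -> M -> M) (mone : M) (msz : M -> nat) :
  lemma3p10_stmt (fun x : R => `|x|) mmul mone msz.
Proof.
apply: (@gen_main R R (fun x : R => `|x|) _ _ _ _ _ id _ M mmul mone msz).
- exact: normr0.
- by move=> x; exact: normr_ge0.
- by move=> x y; exact: normrM.
- exact: normr1.
- exact: normrN1.
- by move=> r r0; rewrite ger0_norm.
Qed.

Lemma gen_cplx (R : realType) (M : choiceType) (mmul : M -> M -> M) (mone : M) (msz : M -> nat) :
  lemma3p10_stmt (@cabs R) mmul mone msz.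
Proof.
apply: (@gen_main R R[i] (@cabs R) _ _ _ _ _ (fun r : R => (r%:C)%C) _ M mmul mone msz).
- exact: ComplexField.Normc.normc0.
- by case=> a b; rewrite /cabs /= sqrtr_ge0.
- exact: ComplexField.Normc.normcM.
- exact: ComplexField.Normc.normc1.
- by rewrite /cabs /= sqrrN expr1n oppr0 expr0n addr0 sqrtr1.
- by move=> r r0; rewrite /cabs /= expr0n addr0 sqrtr_sqr ger0_norm.
Qed.

Unset Implicit Arguments.
Set Strict Implicit.

(* K in {R, C}; H a combinatorial Hopf algebra, either K<Sig> (words) or K[Sig] (multisets). *)
Theorem lemma3p10 (R : realType) (Sig : choiceType) (deg : Sig -> nat) :
  [/\ lemma3p10_stmt (fun x : R => `|x|) (@cat Sig) [::] (wdeg deg),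
      lemma3p10_stmt (fun x : R => `|x|) (@msetD Sig) mset0 (msdeg deg),
      lemma3p10_stmt (@cabs R) (@cat Sig) [::] (wdeg deg) &
      lemma3p10_stmt (@cabs R) (@msetD Sig) mset0 (msdeg deg)].
Proof.
split; [exact: gen_real | exact: gen_real | exact: gen_cplx | exact: gen_cplx].
Qed.
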